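(* Let $p\ge1$ be an integer, $q>1$ and $\alpha\in\mathbb R$. There exists a continuous function $\rho_0:\mathrm{HT}(p,q)\to(0,\infty)$ with the following properties: $\rho_0\in\mathcal C^\infty(\mathrm{HT})$; for every vertex $v$ and every $x\in\mathbb R$, the function $y\mapsto\partial_y\rho_0(x+iy,v)$ has compact support in $(q^{\mathfrak h(v)-1},q^{\mathfrak h(v)})$; $\rho_0$ tends to infinity at infinity; and the functions $|\nabla\rho_0|=y\bigl(|\partial_x\rho_0|^2+|\partial_y\rho_0|^2\bigr)^{1/2}$ and $|\mathcal A_\alpha\rho_0|$, where $\mathcal A_\alpha=y^2(\partial_x^2+\partial_y^2)+\alpha y\partial_y$ on each open strip, are bounded on $\mathrm{HT}^o$. (That is, $\rho_0$ is a strip-adapted exhaustion function for $\mathrm{HT}(p,q)$ equipped with $\phi_e(s)=s^{-2}$, $\psi_e(s)=s^\alpha$.)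
   Context: Treebolic space. Let $T^0$ be the vertex set of the homogeneous tree in which every vertex has $p+1$ neighbours; fix an end $\omega$ and let $\mathfrak h:T^0\to\mathbb Z$ be the Busemann function with respect to $\omega$; each vertex $v$ has one neighbour $v^-$ with $\mathfrak h(v^-)=\mathfrak h(v)-1$ and $p$ neighbours $w$ with $w^-=v$. For $v$ with $k=\mathfrak h(v)$, $S_v=\{(x+iy,v):x\in\mathbb R,q^{k-1}\le y\le q^k\}$, $S_v^o$ the same with strict inequalities, $L_v=\{(x+iq^k,v)\}$. $\mathrm{HT}(p,q)$ is obtained from the disjoint union of the $S_v$ by identifying, for every $w$ with $w^-=v$, the bottom line of $S_w$ with $L_v$ pointwise; $\mathrm{HT}^o=\bigcup_vS_v^o$. Each strip carries the hyperbolic metric $y^{-2}(dx^2+dy^2)$ and $\mathrm{HT}$ the induced path metric (''tends to infinity at infinity'' refers to leaving every compact set). $\mathcal C^\infty(\mathrm{HT})$: continuous $f$ such that for each $v$, $f(\cdot,v)$ has continuous partial derivatives of all orders in $S_v^o$ that are bounded on $\{(z,v)\in S_v^o:|\mathrm{Re}\,z|\le R\}$ for every $R>0$. *)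

(* Defs.v *)
From Stdlib Require Import Reals ZArith List.
From Coquelicot Require Import Coquelicot.
Open Scope R_scope.

(* Edges are {v, pred v}.  Such a structure is exactly a
   homogeneous tree of degree p+1 with a distinguished end (the end of the rays
   v, pred v, pred (pred v), ...) and a Busemann function with respect to it. *)
Definition is_homtree_with_end (p : nat) (V : Type) (pred : V -> V) (h : V -> Z)
  : Prop :=
  (forall v, h (pred v) = (h v - 1)%Z) /\
  (forall v, exists l : list V,
      NoDup l /\ length l = p /\ (forall w, In w l <-> pred w = v)) /\
  (forall u w, exists m n : nat, Nat.iter m pred u = Nat.iter n pred w).

Definition in_strip (q : R) (k : Z) (y : R) : Prop :=
  powerRZ q (k - 1) <= y <= powerRZ q k.
Definition in_ostrip (q : R) (k : Z) (y : R) : Prop :=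
  powerRZ q (k - 1) < y < powerRZ q k.

(* A function on HT(p,q) is represented as f : V -> R -> R -> R,
   f v x y = f(x+iy, v) for (x+iy, v) in S_v (values outside S_v are irrelevant). *)

Definition partial (b : bool) (g : R -> R -> R) : R -> R -> R :=
  fun x y => if b then Derive (fun t => g t y) x else Derive (fun t => g x t) y.
Definition ex_partial (b : bool) (g : R -> R -> R) (x y : R) : Prop :=
  if b then ex_derive (fun t => g t y) x else ex_derive (fun t => g x t) y.
(* iterated partial derivative along a word of directions (last letter applied first) *)
Fixpoint Dw (w : list bool) (g : R -> R -> R) : R -> R -> R :=
  match w with
  | nil => g
  | b :: w' => partial b (Dw w' g)
  end.
Definition dx (g : R -> R -> R) := partial true g.
Definition dy (g : R -> R -> R) := partial false g.

Section HT.
Variables (V : Type) (pred : V -> V) (h : V -> Z) (q : R).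

(* f is well defined on HT: the bottom line of S_w is identified pointwise with
   L_{pred w}, the top line of S_{pred w}. *)
Definition HT_welldef (f : V -> R -> R -> R) : Prop :=
  forall w x, f (pred w) x (powerRZ q (h (pred w))) = f w x (powerRZ q (h (pred w))).

(* continuity on HT: well defined and continuous on each closed strip
   (each line L_v meets only finitely many strips, so this is continuity for
   the quotient / path-metric topology). *)
Definition HT_continuous (f : V -> R -> R -> R) : Prop :=
  HT_welldef f /\
  forall v x y, in_strip q (h v) y ->
    forall eps : R, 0 < eps -> exists delta : R, 0 < delta /\
      forall x' y', in_strip q (h v) y' -> Rabs (x' - x) < delta ->
        Rabs (y' - y) < delta -> Rabs (f v x' y' - f v x y) < eps.

Definition HT_smooth (f : V -> R -> R -> R) : Prop :=
  HT_continuous f /\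
  forall v (w : list bool),
    (forall x y, in_ostrip q (h v) y ->
        (forall b, ex_partial b (Dw w (f v)) x y) /\
        continuous (fun z : R * R => Dw w (f v) (fst z) (snd z)) (x, y)) /\
    (forall Rb : R, exists B : R, forall x y, in_ostrip q (h v) y ->
        Rabs x <= Rb -> Rabs (Dw w (f v) x y) <= B).

(* f tends to infinity at infinity: every sublevel set {f <= M} is relatively
   compact, i.e. contained in a finite union of truncated strips
   S_v /\ {|Re z| <= R}. *)
Definition HT_tends_to_infinity (f : V -> R -> R -> R) : Prop :=
  forall M : R, exists (F : list V) (Rb : R),
    forall v x y, in_strip q (h v) y -> f v x y <= M -> In v F /\ Rabs x <= Rb.

End HT.

(* Main.v *)
From Stdlib Require Import Reals ZArith List Lra Lia FunctionalExtensionality ConstructiveEpsilon ClassicalEpsilon Classical_Prop.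
Require Import Defs.
From Coquelicot Require Import Coquelicot.
Open Scope R_scope.

Fixpoint Pn (n : nat) (f : R -> R) : Prop :=
  match n with O => True | S n => (forall x, ex_derive f x) /\ Pn n (Derive f) end.
Definition smooth (f : R -> R) := forall n, Pn n f.

Lemma Pn_S_le : forall n f, Pn (S n) f -> Pn n f.
Proof. induction n; simpl; intros f H. exact I. destruct H as [H1 H2]. split; auto. Qed.

Lemma Pn_const : forall n c, Pn n (fun _ => c).
Proof.
  induction n; simpl; intros c. exact I. split. intros; apply ex_derive_const.
  replace (Derive (fun _ : R => c)) with (fun _ : R => 0). apply IHn.
  apply functional_extensionality; intros; rewrite Derive_const; auto.
Qed.

Lemma Pn_id : forall n, Pn n (fun x => x).
Proof.
  destruct n; simpl. exact I. split. intros; apply ex_derive_id.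
  replace (Derive (fun x : R => x)) with (fun _ : R => 1). apply Pn_const.
  apply functional_extensionality; intros; rewrite Derive_id; auto.
Qed.

Lemma Pn_plus : forall n f g, Pn n f -> Pn n g -> Pn n (fun x => f x + g x).
Proof.
  induction n; simpl; intros f g Hf Hg. exact I.
  destruct Hf as [Hf1 Hf2]; destruct Hg as [Hg1 Hg2]. split.
  intros x; apply (ex_derive_plus f g x); auto.
  replace (Derive (fun x => f x + g x)) with (fun x => Derive f x + Derive g x). auto.
  apply functional_extensionality; intros; rewrite Derive_plus; auto.
Qed.

Lemma Pn_mult : forall n f g, Pn n f -> Pn n g -> Pn n (fun x => f x * g x).
Proof.
  induction n; simpl; intros f g Hf Hg. exact I.
  pose proof (Pn_S_le n f Hf) as Hf'. pose proof (Pn_S_le n g Hg) as Hg'.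
  destruct Hf as [Hf1 Hf2]; destruct Hg as [Hg1 Hg2]. split.
  intros; apply ex_derive_mult; auto.
  replace (Derive (fun x => f x * g x)) with (fun x => Derive f x * g x + f x * Derive g x).
  apply Pn_plus; auto.
  apply functional_extensionality; intros; rewrite Derive_mult; auto.
Qed.

Lemma Pn_inv : forall n f, Pn n f -> (forall x, f x <> 0) -> Pn n (fun x => / f x).
Proof.
  induction n; simpl; intros f Hf Hnz. exact I.
  pose proof (Pn_S_le n f Hf) as Hf'.
  destruct Hf as [Hf1 Hf2]. split.
  intros; apply ex_derive_inv; auto.
  replace (Derive (fun x => / f x)) with (fun x => (-1 * Derive f x) * (/ f x * / f x)).
  apply Pn_mult. apply Pn_mult; auto. apply Pn_const. apply Pn_mult; auto.
  apply functional_extensionality; intros; rewrite Derive_inv; auto.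
  specialize (Hnz x). field. auto.
Qed.

Lemma Pn_ln : forall n f, Pn n f -> (forall x, 0 < f x) -> Pn n (fun x => ln (f x)).
Proof.
  destruct n; simpl; intros f Hf Hp. exact I.
  pose proof (Pn_S_le n f Hf) as Hf'.
  destruct Hf as [Hf1 Hf2].
  assert (D : forall x, is_derive (fun x => ln (f x)) x (Derive f x * / f x)).
  { intros x. pose proof (Derive_correct _ _ (Hf1 x)) as H.
    apply (is_derive_comp ln f x (/ f x) (Derive f x)); auto.
    apply is_derive_Reals. apply derivable_pt_lim_ln. auto. }
  split. intros x; eexists; apply D.
  replace (Derive (fun x => ln (f x))) with (fun x => Derive f x * / f x).
  apply Pn_mult; auto. apply Pn_inv; auto. intros x; specialize (Hp x); lra.
  apply functional_extensionality; intros; symmetry; apply is_derive_unique; auto.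
Qed.

Lemma Pn_aff : forall n f a b, Pn n f -> Pn n (fun x => f (a * x + b)).
Proof.
  induction n; simpl; intros f a b Hf. exact I.
  destruct Hf as [Hf1 Hf2].
  assert (D : forall x, is_derive (fun x => f (a*x+b)) x (a * Derive f (a*x+b))).
  { intros x. pose proof (Derive_correct _ _ (Hf1 (a*x+b))) as H.
    eapply (is_derive_comp f (fun x => a*x+b) x); eauto.
    auto_derive; auto. ring. }
  split. intros x; eexists; apply D.
  replace (Derive (fun x => f (a*x+b))) with (fun x => a * Derive f (a*x+b)).
  apply Pn_mult. apply Pn_const. apply IHn; auto.
  apply functional_extensionality; intros; symmetry; apply is_derive_unique; auto.
Qed.

Lemma smooth_const c : smooth (fun _ => c). Proof. intro n; apply Pn_const. Qed.
Lemma smooth_id : smooth (fun x => x). Proof. intro n; apply Pn_id. Qed.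
Lemma smooth_plus f g : smooth f -> smooth g -> smooth (fun x => f x + g x).
Proof. intros; intro n; apply Pn_plus; auto. Qed.
Lemma smooth_mult f g : smooth f -> smooth g -> smooth (fun x => f x * g x).
Proof. intros; intro n; apply Pn_mult; auto. Qed.
Lemma smooth_inv f : smooth f -> (forall x, f x <> 0) -> smooth (fun x => / f x).
Proof. intros; intro n; apply Pn_inv; auto. Qed.
Lemma smooth_ln f : smooth f -> (forall x, 0 < f x) -> smooth (fun x => ln (f x)).
Proof. intros; intro n; apply Pn_ln; auto. Qed.
Lemma smooth_aff f a b : smooth f -> smooth (fun x => f (a * x + b)).
Proof. intros; intro n; apply Pn_aff; auto. Qed.
Lemma smooth_ex f : smooth f -> forall x, ex_derive f x.
Proof. intros H; apply (H 1%nat). Qed.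
Lemma smooth_D f : smooth f -> smooth (Derive f).
Proof. intros H n; apply (H (S n)). Qed.
Lemma smooth_Dn f n : smooth f -> smooth (Derive_n f n).
Proof.
  intros H; induction n. exact H.
  replace (Derive_n f (S n)) with (Derive (Derive_n f n)).
  apply smooth_D; auto. apply functional_extensionality; reflexivity.
Qed.
Lemma smooth_cont f : smooth f -> forall x, continuity_pt f x.
Proof.
  intros H x. apply continuity_pt_filterlim. exact (@ex_derive_continuous R_AbsRing R_NormedModule f x (smooth_ex f H x)).
Qed.
Inductive ispoly : (R -> R) -> Prop :=
| ip_const c : ispoly (fun _ => c)
| ip_id : ispoly (fun u => u)
| ip_plus f g : ispoly f -> ispoly g -> ispoly (fun u => f u + g u)
| ip_mult f g : ispoly f -> ispoly g -> ispoly (fun u => f u * g u).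

Lemma ispoly_deriv : forall f, ispoly f -> exists f', ispoly f' /\ forall u, is_derive f u (f' u).
Proof.
  induction 1.
  - exists (fun _ => 0); split. constructor. intros; apply (@is_derive_const R_AbsRing).
  - exists (fun _ => 1); split. constructor. intros; apply (@is_derive_id R_AbsRing).
  - destruct IHispoly1 as [f' [P1 D1]]; destruct IHispoly2 as [g' [P2 D2]].
    exists (fun u => f' u + g' u); split. constructor; auto. intros; apply (@is_derive_plus R_AbsRing R_NormedModule); auto.
  - destruct IHispoly1 as [f' [P1 D1]]; destruct IHispoly2 as [g' [P2 D2]].
    exists (fun u => f' u * g u + f u * g' u); split. constructor; constructor; auto.
    intros. apply (@is_derive_mult R_AbsRing f g); auto. intros; apply Rmult_comm.
Qed.

Lemma ispoly_bound : forall f, ispoly f -> exists C N, 0 <= C /\ forall u, 0 <= u -> Rabs (f u) <= C * (1+u)^N.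
Proof.
  induction 1.
  - exists (Rabs c), 0%nat. split. apply Rabs_pos. intros; simpl; lra.
  - exists 1, 1%nat. split. lra. intros; simpl. rewrite Rabs_right; lra.
  - destruct IHispoly1 as [C1 [N1 [HC1 B1]]]; destruct IHispoly2 as [C2 [N2 [HC2 B2]]].
    exists (C1 + C2), (N1 + N2)%nat. split. lra. intros u Hu.
    assert (E1 : (1+u)^N1 <= (1+u)^(N1+N2)) by (apply Rle_pow; [lra|lia]).
    assert (E2 : (1+u)^N2 <= (1+u)^(N1+N2)) by (apply Rle_pow; [lra|lia]).
    specialize (B1 u Hu); specialize (B2 u Hu).
    eapply Rle_trans. apply Rabs_triang.
    assert (C1 * (1+u)^N1 <= C1 * (1+u)^(N1+N2)) by (apply Rmult_le_compat_l; auto).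
    assert (C2 * (1+u)^N2 <= C2 * (1+u)^(N1+N2)) by (apply Rmult_le_compat_l; auto).
    nra.
  - destruct IHispoly1 as [C1 [N1 [HC1 B1]]]; destruct IHispoly2 as [C2 [N2 [HC2 B2]]].
    exists (C1 * C2), (N1 + N2)%nat. split. nra. intros u Hu.
    specialize (B1 u Hu); specialize (B2 u Hu). rewrite Rabs_mult, pow_add.
    replace (C1 * C2 * ((1 + u) ^ N1 * (1 + u) ^ N2)) with ((C1 * (1+u)^N1) * (C2 * (1+u)^N2)) by ring.
    apply Rmult_le_compat; auto; apply Rabs_pos.
Qed.

Lemma exp_nat : forall n a, exp (INR n * a) = exp a ^ n.
Proof.
  induction n; intros a. simpl. rewrite Rmult_0_l, exp_0; auto.
  rewrite S_INR. replace ((INR n + 1) * a) with (INR n * a + a) by ring.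
  rewrite exp_plus, IHn. simpl. ring.
Qed.

Lemma exp_dom : forall N u, 0 <= u ->
  (1+u)^N * exp (- u) <= (INR N + 1)^(S N) / (INR N + 1 + u).
Proof.
  intros N u Hu. set (K := INR N + 1).
  assert (HK : 1 <= K) by (unfold K; pose proof (pos_INR N); lra).
  assert (E : (1 + u / K)^(S N) <= exp u).
  { replace u with (INR (S N) * (u / K)) at 2.
    rewrite exp_nat. apply pow_incr. split.
    assert (0 <= u / K) by (apply Rdiv_le_0_compat; lra). lra. apply exp_ineq1_le.
    rewrite S_INR. fold K. field. lra. }
  assert (E2 : (1 + u / K)^(S N) = (K + u)^(S N) / K^(S N)).
  { unfold Rdiv. rewrite <- pow_inv, <- Rpow_mult_distr. f_equal. field. lra. }
  rewrite E2 in E.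
  assert (HKu : 0 < K + u) by lra.
  assert (P1 : 0 < (K+u)^(S N)) by (apply pow_lt; lra).
  assert (P2 : 0 < K^(S N)) by (apply pow_lt; lra).
  assert (P3 : 0 < exp u) by apply exp_pos.
  rewrite exp_Ropp.
  assert (A : (1+u)^N <= (K+u)^N) by (apply pow_incr; lra).
  assert (P4 : 0 <= (1+u)^N) by (apply pow_le; lra).
  apply Rle_trans with ((K+u)^N * / exp u).
  apply Rmult_le_compat_r. left; apply Rinv_0_lt_compat; auto. auto.
  apply Rle_trans with ((K+u)^N * (K^(S N) / (K+u)^(S N))).
  apply Rmult_le_compat_l. apply pow_le; lra.
  rewrite <- (Rinv_div ((K+u)^(S N)) (K^(S N))). apply Rinv_le_contravar.
  apply Rdiv_lt_0_compat; auto. auto.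
  right. simpl. field. split. lra. apply Rgt_not_eq, pow_lt; lra.
Qed.
Definition flatf (Q : R -> R) (t : R) : R :=
  if Rle_dec t 0 then 0 else Q (/t) * exp (- /t).

Lemma loc_R : forall t d (P : R -> Prop), 0 < d -> (forall y, Rabs (y - t) < d -> P y) -> locally t P.
Proof.
  intros t d P Hd H. exists (mkposreal d Hd). intros y Hy. apply H. exact Hy.
Qed.

Lemma flat_small : forall Q, ispoly Q -> exists K, 0 <= K /\
  forall t, 0 < t -> Rabs (Q (/t) * exp (- /t)) <= K * t.
Proof.
  intros Q HQ. destruct (ispoly_bound Q HQ) as [C [N [HC B]]].
  exists (C * (INR N + 1)^(S N)). split. apply Rmult_le_pos; auto. apply pow_le. pose proof (pos_INR N); lra.
  intros t Ht. assert (Hu : 0 <= /t) by (left; apply Rinv_0_lt_compat; auto).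
  rewrite Rabs_mult, (Rabs_right (exp _)) by (left; apply exp_pos).
  apply Rle_trans with (C * (1 + /t)^N * exp (- /t)).
  apply Rmult_le_compat_r. left; apply exp_pos. apply B; auto.
  pose proof (exp_dom N (/t) Hu) as E.
  set (K := INR N + 1) in *. assert (HK: 1 <= K) by (unfold K; pose proof (pos_INR N); lra).
  assert (F : K ^ S N / (K + / t) <= K^(S N) * t).
  { unfold Rdiv. apply Rmult_le_compat_l. apply pow_le; lra.
    replace t with (/ / t) at 2 by (field; lra). apply Rinv_le_contravar.
    apply Rinv_0_lt_compat; auto. lra. }
  rewrite Rmult_assoc. rewrite (Rmult_assoc C). apply Rmult_le_compat_l; auto. lra.
Qed.

Lemma flat_deriv : forall Q, ispoly Q -> exists R', ispoly R' /\
  forall t, is_derive (flatf Q) t (flatf R' t).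
Proof.
  intros Q HQ. destruct (ispoly_deriv Q HQ) as [Q' [HQ' DQ]].
  exists (fun u => u * u * (Q u + (-1) * Q' u)). split.
  { repeat constructor; auto. }
  intros t. destruct (Rtotal_order t 0) as [Hlt | [Heq | Hgt]].
  - apply (is_derive_ext_loc (fun _ => 0)).
    apply (loc_R t (-t)). lra. intros y Hy. unfold flatf. destruct (Rle_dec y 0); auto.
    apply Rabs_def2 in Hy. lra.
    unfold flatf. destruct (Rle_dec t 0); [|lra]. apply (@is_derive_const R_AbsRing).
  - subst t. apply is_derive_Reals.
    destruct (flat_small (fun u => u * Q u)) as [K [HK B]]. constructor; auto. constructor.
    intros eps Heps. assert (Hd : 0 < eps / (K+1)) by (apply Rdiv_lt_0_compat; lra).
    exists (mkposreal _ Hd). intros hh Hh0 Hh. simpl in Hh.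
    unfold flatf. destruct (Rle_dec 0 0); [|lra]. rewrite Rplus_0_l.
    destruct (Rle_dec hh 0).
    + replace ((0 - 0) / hh - 0) with 0 by (field; lra). rewrite Rabs_R0; auto.
    + assert (Hp : 0 < hh) by lra. specialize (B hh Hp).
      replace ((Q (/ hh) * exp (- / hh) - 0) / hh - 0) with (/ hh * Q (/ hh) * exp (- / hh)) by (field; lra).
      eapply Rle_lt_trans. apply B. rewrite Rabs_right in Hh by lra.
      apply Rle_lt_trans with (K * (eps / (K+1))). apply Rmult_le_compat_l; lra.
      unfold Rdiv. rewrite <- Rmult_assoc.
      apply Rlt_le_trans with ((K+1) * eps * / (K+1)). apply Rmult_lt_compat_r.
      apply Rinv_0_lt_compat; lra. nra. right; field; lra.
  - apply (is_derive_ext_loc (fun s => Q (/s) * exp (- /s))).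
    apply (loc_R t t). lra. intros y Hy. unfold flatf. apply Rabs_def2 in Hy. destruct (Rle_dec y 0); [lra|]. auto.
    assert (H : is_derive (fun s => Q (/s) * exp (- /s)) t
      (scal (-/(t*t)) (Q' (/t)) * exp(-/t) + Q(/t) * (exp(-/t) * (/(t*t))))).
    { apply (@is_derive_mult R_AbsRing (fun s => Q(/s)) (fun s => exp(-/s))).
      apply (is_derive_comp Q (fun s => /s)). apply DQ. auto_derive. lra. field. lra.
      auto_derive. lra. field. lra. intros; apply Rmult_comm. }
    replace (flatf _ t) with (scal (-/(t*t)) (Q' (/t)) * exp(-/t) + Q(/t) * (exp(-/t) * (/(t*t)))). exact H.
    unfold flatf. destruct (Rle_dec t 0); [lra|]. unfold scal; simpl; unfold mult; simpl. field. lra.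
Qed.

Lemma Pn_flat : forall n Q, ispoly Q -> Pn n (flatf Q).
Proof.
  induction n; simpl; intros Q HQ. exact I.
  destruct (flat_deriv Q HQ) as [R' [HR D]]. split.
  intros x; eexists; apply D.
  replace (Derive (flatf Q)) with (flatf R'). auto.
  apply functional_extensionality; intros; symmetry; apply is_derive_unique; auto.
Qed.

Definition phi0 := flatf (fun _ => 1).
Lemma smooth_phi0 : smooth phi0.
Proof. intro n; apply Pn_flat; constructor. Qed.
Lemma phi0_nonpos t : t <= 0 -> phi0 t = 0.
Proof. unfold phi0, flatf; intros; destruct (Rle_dec t 0); [auto|lra]. Qed.
Lemma phi0_pos t : 0 < t -> 0 < phi0 t.
Proof. unfold phi0, flatf; intros; destruct (Rle_dec t 0); [lra|]. rewrite Rmult_1_l; apply exp_pos. Qed.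
Lemma phi0_nonneg t : 0 <= phi0 t.
Proof. destruct (Rle_dec t 0). rewrite phi0_nonpos; lra. left; apply phi0_pos; lra. Qed.

Definition Sst (t : R) := phi0 t * / (phi0 t + phi0 (-1 * t + 1)).
Lemma Sst_den t : 0 < phi0 t + phi0 (-1 * t + 1).
Proof.
  destruct (Rle_dec t 0). pose proof (phi0_pos (-1*t+1)). pose proof (phi0_nonneg t). lra.
  pose proof (phi0_pos t). pose proof (phi0_nonneg (-1*t+1)). lra.
Qed.
Lemma smooth_Sst : smooth Sst.
Proof.
  apply smooth_mult. apply smooth_phi0. apply smooth_inv.
  apply smooth_plus. apply smooth_phi0. apply smooth_aff, smooth_phi0.
  intros x; pose proof (Sst_den x); lra.
Qed.
Lemma Sst_range t : 0 <= Sst t <= 1.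
Proof.
  unfold Sst. pose proof (Sst_den t). pose proof (phi0_nonneg t). pose proof (phi0_nonneg (-1*t+1)).
  split. apply Rmult_le_pos; auto. left; apply Rinv_0_lt_compat; auto.
  apply Rmult_le_reg_r with (phi0 t + phi0 (-1 * t + 1)); auto.
  rewrite Rmult_assoc, Rinv_l by lra. lra.
Qed.
Lemma Sst_0 t : t <= 0 -> Sst t = 0.
Proof. intros; unfold Sst; rewrite phi0_nonpos; auto; ring. Qed.
Lemma Sst_1 t : 1 <= t -> Sst t = 1.
Proof. intros; unfold Sst; rewrite (phi0_nonpos (-1*t+1)) by lra. rewrite Rplus_0_r.
  apply Rinv_r. pose proof (phi0_pos t); lra. Qed.
Lemma cont_bound : forall f a b, (forall t, continuity_pt f t) ->
  exists M, forall t, a <= t <= b -> Rabs (f t) <= M.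
Proof.
  intros f a b Hc. destruct (Rle_dec a b) as [Hab|Hab].
  - destruct (continuity_ab_maj f a b Hab (fun c _ => Hc c)) as [m1 [H1 _]].
    destruct (continuity_ab_maj (fun t => - f t) a b Hab (fun c _ => continuity_pt_opp _ _ (Hc c))) as [m2 [H2 _]].
    exists (Rmax (f m1) (- f m2)). intros t Ht. specialize (H1 t Ht); specialize (H2 t Ht).
    apply Rabs_le. pose proof (Rmax_l (f m1) (- f m2)). pose proof (Rmax_r (f m1) (- f m2)). lra.
  - exists 0. intros; lra.
Qed.

Lemma Derive_locconst : forall f t d, 0 < d -> (forall u, Rabs (u - t) < d -> f u = f t) -> Derive f t = 0.
Proof.
  intros f t d Hd H. rewrite (Derive_ext_loc f (fun _ => f t)). apply Derive_const.
  apply (loc_R t d); auto.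
Qed.

Lemma DD_locconst : forall f t d, 0 < d -> (forall u, Rabs (u - t) < d -> f u = f t) ->
  Derive f t = 0 /\ Derive (Derive f) t = 0.
Proof.
  intros f t d Hd H.
  assert (A : forall u, Rabs (u - t) < d/2 -> Derive f u = 0).
  { intros u Hu. apply (Derive_locconst f u (d/2)). lra. intros u' Hu'.
    rewrite (H u'), (H u); auto. apply Rabs_def2 in Hu; apply Rabs_def1; lra.
    apply Rabs_def2 in Hu; apply Rabs_def2 in Hu'; apply Rabs_def1; lra. }
  split. apply (Derive_locconst f t d); auto.
  apply (Derive_locconst (Derive f) t (d/2)). lra. intros u Hu. rewrite !A; auto.
  rewrite Rminus_eq_0, Rabs_R0; lra.
Qed.

Lemma Sst_out : forall t, (t < 0 \/ 1 < t) -> Derive Sst t = 0 /\ Derive (Derive Sst) t = 0.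
Proof.
  intros t [Ht|Ht].
  - apply (DD_locconst Sst t (-t)). lra. intros u Hu. apply Rabs_def2 in Hu. rewrite !Sst_0; lra.
  - apply (DD_locconst Sst t (t-1)). lra. intros u Hu. apply Rabs_def2 in Hu. rewrite !Sst_1; lra.
Qed.

Lemma Sst_bounds : exists M1 M2, 0 <= M1 /\ 0 <= M2 /\ forall t,
  Rabs (Derive Sst t) <= M1 /\ Rabs (Derive (Derive Sst) t) <= M2.
Proof.
  destruct (cont_bound (Derive Sst) 0 1) as [M1 H1].
  { apply smooth_cont, smooth_D, smooth_Sst. }
  destruct (cont_bound (Derive (Derive Sst)) 0 1) as [M2 H2].
  { apply smooth_cont, smooth_D, smooth_D, smooth_Sst. }
  exists (Rabs M1), (Rabs M2). split. apply Rabs_pos. split. apply Rabs_pos.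
  intros t. destruct (Rlt_dec t 0) as [Ht|Ht]; [|destruct (Rlt_dec 1 t) as [Ht'|Ht']].
  - destruct (Sst_out t (or_introl Ht)) as [E1 E2]. rewrite E1, E2, Rabs_R0. split; apply Rabs_pos.
  - destruct (Sst_out t (or_intror Ht')) as [E1 E2]. rewrite E1, E2, Rabs_R0. split; apply Rabs_pos.
  - split. eapply Rle_trans. apply H1; lra. apply Rle_abs.
    eapply Rle_trans. apply H2; lra. apply Rle_abs.
Qed.
Definition Gf (Q x : R) := ln (Q*Q + x*x) + (-1) * ln (Q*Q).
Definition G1 (Q x : R) := 2*x / (Q*Q + x*x).
Definition G2 (Q x : R) := 2*(Q*Q - x*x) / ((Q*Q + x*x)*(Q*Q+x*x)).

Lemma QQpos Q x : 0 < Q -> 0 < Q*Q + x*x.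
Proof. intros; nra. Qed.

Lemma Gf_deriv Q : 0 < Q -> Derive (Gf Q) = G1 Q.
Proof.
  intros HQ. apply functional_extensionality; intros x. apply is_derive_unique.
  pose proof (QQpos Q x HQ). unfold Gf, G1. auto_derive. lra. field. lra.
Qed.
Lemma G1_deriv Q : 0 < Q -> Derive (G1 Q) = G2 Q.
Proof.
  intros HQ. apply functional_extensionality; intros x. apply is_derive_unique.
  pose proof (QQpos Q x HQ). unfold G2, G1. auto_derive. lra. field. lra.
Qed.
Lemma smooth_Gf Q : 0 < Q -> smooth (Gf Q).
Proof.
  intros HQ. unfold Gf. apply smooth_plus. apply smooth_ln.
  apply smooth_plus. apply smooth_const. apply smooth_mult; apply smooth_id.
  intros; apply QQpos; auto. apply smooth_const.
Qed.
Lemma Gf_nonneg Q x : 0 < Q -> 0 <= Gf Q x.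
Proof.
  intros HQ. unfold Gf. assert (ln (Q*Q) <= ln (Q*Q+x*x)). apply ln_le. nra. nra. lra.
Qed.
Lemma G1_bound Q x : 0 < Q -> Rabs (G1 Q x) <= / Q.
Proof.
  intros HQ. pose proof (QQpos Q x HQ). unfold G1. unfold Rdiv. rewrite Rabs_mult.
  rewrite (Rabs_right (/ _)) by (left; apply Rinv_0_lt_compat; auto).
  apply Rmult_le_reg_r with (Q*Q+x*x); auto. rewrite Rmult_assoc, Rinv_l by lra.
  apply Rmult_le_reg_l with Q; auto. field_simplify; try lra.
  rewrite Rabs_mult, (Rabs_right 2) by lra.
  destruct (Rle_dec 0 x). rewrite Rabs_right by lra. pose proof (pow2_ge_0 (Q-x)). nra.
  rewrite Rabs_left by lra. pose proof (pow2_ge_0 (Q+x)). nra.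
Qed.
Lemma G2_bound Q x : 0 < Q -> Rabs (G2 Q x) <= 2 / (Q*Q).
Proof.
  intros HQ. pose proof (QQpos Q x HQ). unfold G2. unfold Rdiv. rewrite Rabs_mult.
  assert (0 < (Q*Q + x*x)*(Q*Q+x*x)) by nra.
  rewrite (Rabs_right (/ _)) by (left; apply Rinv_0_lt_compat; auto).
  apply Rmult_le_reg_r with ((Q*Q+x*x)*(Q*Q+x*x)); auto. rewrite Rmult_assoc, Rinv_l by lra.
  apply Rmult_le_reg_l with (Q*Q). nra. field_simplify; try lra.
  rewrite Rabs_mult, (Rabs_right 2) by lra. destruct (Rle_dec 0 (Q*Q-x*x)).
  rewrite Rabs_right by lra. pose proof (pow2_ge_0 x). pose proof (pow2_ge_0 Q). nra.
  rewrite Rabs_left by lra. pose proof (pow2_ge_0 x). pose proof (pow2_ge_0 Q). nra.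
Qed.

Lemma Gf_diff L q x : 0 < L -> 1 < q ->
  0 <= Gf L x - Gf (q*L) x <= ln (q*q).
Proof.
  intros HL Hq. unfold Gf.
  assert (HLL : 0 < L*L) by nra. assert (Hx : 0 <= x*x) by nra.
  assert (Hqq : 1 < q*q) by nra.
  assert (HqL : L*L <= (q*L)*(q*L)) by (replace ((q*L)*(q*L)) with ((q*q)*(L*L)) by ring; nra).
  assert (E : ln ((q*L)*(q*L)) = ln (q*q) + ln (L*L)).
  { rewrite <- ln_mult by nra. f_equal; ring. }
  rewrite E.
  assert (A1 : ln (L*L+x*x) <= ln ((q*L)*(q*L)+x*x)) by (apply ln_le; nra).
  assert (A2 : ln (L*L+x*x) + ln (q*q) >= ln ((q*L)*(q*L)+x*x)).
  { rewrite <- ln_mult by nra. apply Rle_ge, ln_le. nra. nra. }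
  assert (A3 : 0 <= ln (q*q)). { rewrite <- ln_1. apply ln_le; nra. }
  assert (A4 : ln (L*L+x*x) + ln ((q*L)*(q*L)) >= ln (L*L) + ln ((q*L)*(q*L)+x*x)).
  { rewrite <- !ln_mult by nra. apply Rle_ge, ln_le. nra. nra. }
  rewrite E in A4. lra.
Qed.
Section Tree.
Variables (V : Type) (pred : V -> V).

Fixpoint desc (ch : V -> list V) (m : nat) (u : V) : list V :=
  match m with O => u :: nil | S m => flat_map ch (desc ch m u) end.

Lemma desc_in : forall ch, (forall v, In v (ch (pred v))) ->
  forall m v, In v (desc ch m (Nat.iter m pred v)).
Proof.
  intros ch Hch. induction m; intros v. simpl; auto.
  rewrite Nat.iter_succ_r. simpl. apply in_flat_map. exists (pred v). split; auto.
Qed.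

Lemma tree_dist : forall p h, is_homtree_with_end p V pred h ->
  exists c : V -> R, (forall v, 0 <= c v) /\ (forall v, c v - 1 <= c (pred v) <= c v + 1) /\
    (forall M, exists F : list V, forall v, c v <= M -> In v F).
Proof.
  intros p h [H1 [H2 H3]].
  destruct (Classical_Prop.classic (exists o : V, True)) as [[o _]|Hno].
  2:{ exists (fun _ => 0). split. intros; lra. split. intros; lra.
      intros M; exists nil. intros v; exfalso; apply Hno; exists v; auto. }
  set (ch := fun v => proj1_sig (constructive_indefinite_description _ (H2 v))).
  assert (Hch : forall v w, In w (ch v) <-> pred w = v).
  { intros v w. unfold ch. apply (proj2 (proj2 (proj2_sig (constructive_indefinite_description _ (H2 v))))). }
  set (P := fun v k => exists m n : nat, (m + n = k)%nat /\ Nat.iter m pred v = Nat.iter n pred o).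
  assert (Pex : forall v, exists k, P v k).
  { intros v. destruct (H3 v o) as [m [n E]]. exists (m+n)%nat, m, n. auto. }
  set (d := fun v => proj1_sig (epsilon_smallest (P v) (fun k => excluded_middle_informative _) (Pex v))).
  assert (Hd : forall v, P v (d v) /\ forall k, P v k -> (d v <= k)%nat).
  { intros v. unfold d. destruct (epsilon_smallest _ _ _) as [k Hk]. simpl. auto. }
  exists (fun v => INR (d v)). split. intros; apply pos_INR. split.
  - intros v. destruct (Hd v) as [[m [n [E1 E2]]] Hmin].
    destruct (Hd (pred v)) as [[m' [n' [E1' E2']]] Hmin'].
    assert (A : (d v <= d (pred v) + 1)%nat).
    { apply Hmin. exists (S m'), n'. split. lia. rewrite Nat.iter_succ_r. auto. }
    assert (B : (d (pred v) <= d v + 1)%nat).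
    { destruct m as [|m].
      - apply Hmin'. exists 0%nat, (S n). split. lia. simpl in E2 |- *. rewrite E2; auto.
      - apply Nat.le_trans with (m+n)%nat; [|lia]. apply Hmin'. exists m, n. split. lia. rewrite Nat.iter_succ_r in E2. auto. }
    apply le_INR in A; apply le_INR in B. rewrite plus_INR in A, B. simpl in A, B. lra.
  - intros M. set (N := Z.to_nat (up M)).
    exists (flat_map (fun n => flat_map (fun m => desc ch m (Nat.iter n pred o)) (seq 0 (S N))) (seq 0 (S N))).
    intros v Hv. destruct (Hd v) as [[m [n [E1 E2]]] _].
    assert (HN : (d v <= N)%nat).
    { destruct (archimed M) as [Hup _]. unfold N.
      assert (IZR (Z.of_nat (d v)) < IZR (up M)) by (rewrite <- INR_IZR_INZ; lra).
      apply lt_IZR in H. lia. }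
    apply in_flat_map. exists n. split. apply in_seq. lia.
    apply in_flat_map. exists m. split. apply in_seq. lia.
    rewrite <- E2. apply desc_in. intros w; apply Hch; auto.
Qed.
End Tree.
Definition sep2 (A1 B1 A2 B2 : R -> R) : R -> R -> R := fun x y => A1 x * B1 y + A2 x * B2 y.
Fixpoint nt (w : list bool) : nat := match w with nil => O | true :: w => S (nt w) | false :: w => nt w end.
Fixpoint nf (w : list bool) : nat := match w with nil => O | true :: w => nf w | false :: w => S (nf w) end.

Lemma exD_x f1 f2 c1 c2 x : ex_derive f1 x -> ex_derive f2 x -> ex_derive (fun t => f1 t * c1 + f2 t * c2) x.
Proof. intros H1 H2. apply (ex_derive_plus (fun t => f1 t * c1) (fun t => f2 t * c2) x); apply ex_derive_mult; auto; apply ex_derive_const. Qed.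
Lemma exD_y f1 f2 c1 c2 x : ex_derive f1 x -> ex_derive f2 x -> ex_derive (fun t => c1 * f1 t + c2 * f2 t) x.
Proof. intros H1 H2. apply (ex_derive_plus (fun t => c1 * f1 t) (fun t => c2 * f2 t) x); apply ex_derive_mult; auto; apply ex_derive_const. Qed.
Lemma D_x f1 f2 c1 c2 x : ex_derive f1 x -> ex_derive f2 x ->
  Derive (fun t => f1 t * c1 + f2 t * c2) x = Derive f1 x * c1 + Derive f2 x * c2.
Proof. intros H1 H2. rewrite (Derive_plus (fun t => f1 t * c1) (fun t => f2 t * c2)).
  rewrite !Derive_scal_l; auto. apply ex_derive_mult; auto; apply ex_derive_const. apply ex_derive_mult; auto; apply ex_derive_const. Qed.
Lemma D_y f1 f2 c1 c2 x : ex_derive f1 x -> ex_derive f2 x ->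
  Derive (fun t => c1 * f1 t + c2 * f2 t) x = c1 * Derive f1 x + c2 * Derive f2 x.
Proof. intros H1 H2. rewrite (Derive_plus (fun t => c1 * f1 t) (fun t => c2 * f2 t)).
  rewrite !Derive_scal; auto. apply ex_derive_mult; auto; apply ex_derive_const. apply ex_derive_mult; auto; apply ex_derive_const. Qed.

Lemma Dw_sep2 A1 B1 A2 B2 : smooth A1 -> smooth B1 -> smooth A2 -> smooth B2 ->
  forall w, Dw w (sep2 A1 B1 A2 B2) =
    sep2 (Derive_n A1 (nt w)) (Derive_n B1 (nf w)) (Derive_n A2 (nt w)) (Derive_n B2 (nf w)).
Proof.
  intros S1 S2 S3 S4. induction w as [|b w IH]. reflexivity.
  simpl. rewrite IH. destruct b; simpl; unfold partial, sep2;
  apply functional_extensionality; intros x; apply functional_extensionality; intros y.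
  - apply D_x; apply smooth_ex, smooth_Dn; auto.
  - apply D_y; apply smooth_ex, smooth_Dn; auto.
Qed.

Lemma sep2_ex A1 B1 A2 B2 : smooth A1 -> smooth B1 -> smooth A2 -> smooth B2 ->
  forall b x y, ex_partial b (sep2 A1 B1 A2 B2) x y.
Proof.
  intros S1 S2 S3 S4 b x y. destruct b; simpl; unfold sep2.
  apply exD_x; apply smooth_ex; auto. apply exD_y; apply smooth_ex; auto.
Qed.

Lemma cont_x f x y : continuity_pt f x -> continuity_2d_pt (fun u v => f u) x y.
Proof. intros H. apply (continuity_1d_2d_pt_comp f (fun u v => u)); auto. apply continuity_2d_pt_id1. Qed.
Lemma cont_y f x y : continuity_pt f y -> continuity_2d_pt (fun u v => f v) x y.
Proof. intros H. apply (continuity_1d_2d_pt_comp f (fun u v => v)); auto. apply continuity_2d_pt_id2. Qed.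

Lemma sep2_cont A1 B1 A2 B2 : smooth A1 -> smooth B1 -> smooth A2 -> smooth B2 ->
  forall x y, continuity_2d_pt (sep2 A1 B1 A2 B2) x y.
Proof.
  intros S1 S2 S3 S4 x y. unfold sep2.
  apply continuity_2d_pt_plus; apply continuity_2d_pt_mult;
   (apply cont_x || apply cont_y); apply smooth_cont; auto.
Qed.

Lemma sep2_bound A1 B1 A2 B2 : smooth A1 -> smooth B1 -> smooth A2 -> smooth B2 ->
  forall a b c d, exists B, forall x y, a <= x <= b -> c <= y <= d -> Rabs (sep2 A1 B1 A2 B2 x y) <= B.
Proof.
  intros S1 S2 S3 S4 a b c d.
  destruct (cont_bound A1 a b (smooth_cont _ S1)) as [M1 H1].
  destruct (cont_bound B1 c d (smooth_cont _ S2)) as [M2 H2].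
  destruct (cont_bound A2 a b (smooth_cont _ S3)) as [M3 H3].
  destruct (cont_bound B2 c d (smooth_cont _ S4)) as [M4 H4].
  exists (M1 * M2 + M3 * M4). intros x y Hx Hy. unfold sep2.
  eapply Rle_trans. apply Rabs_triang. rewrite !Rabs_mult.
  apply Rplus_le_compat; apply Rmult_le_compat; try apply Rabs_pos; auto.
Qed.
Definition svf (L U y : R) := Sst (3/(U-L) * y + (-(3*L/(U-L)) - 1)).
Definition A1f (cp L x : R) := 1 + cp + Gf L x.
Definition A2f (dc L U x : R) := dc + (Gf U x + (-1) * Gf L x).
Definition rhof (cp cv L U : R) := sep2 (A1f cp L) (fun _ => 1) (A2f (cv - cp) L U) (svf L U).

Lemma Dn0 f x : Derive_n f 0 x = f x. Proof. reflexivity. Qed.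
Lemma Dn1 f x : Derive_n f 1 x = Derive f x. Proof. reflexivity. Qed.
Lemma Dn2 f x : Derive_n f 2 x = Derive (Derive f) x. Proof. reflexivity. Qed.

Lemma Derive_cplus f c x : ex_derive f x -> Derive (fun t => c + f t) x = Derive f x.
Proof. intros H. rewrite (Derive_plus (fun _ => c) f). rewrite Derive_const; ring. apply ex_derive_const. auto. Qed.
Lemma Derive_pm f g x : ex_derive f x -> ex_derive g x ->
  Derive (fun t => f t + (-1) * g t) x = Derive f x + (-1) * Derive g x.
Proof. intros H1 H2. rewrite (Derive_plus f (fun t => (-1) * g t)). rewrite Derive_scal; auto. auto.
  apply ex_derive_mult; auto; apply ex_derive_const. Qed.
Lemma aff_derive f a b y : ex_derive f (a*y+b) -> Derive (fun y => f (a*y+b)) y = a * Derive f (a*y+b).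
Proof.
  intros H. apply is_derive_unique. pose proof (Derive_correct _ _ H) as D.
  eapply (is_derive_comp f (fun x => a*x+b) y) in D. 2:{ auto_derive; auto; ring. } replace (a * Derive f (a*y+b)) with (scal (a * 1) (Derive f (a * y + b))). exact D. unfold scal; simpl; unfold mult; simpl; ring.
Qed.

Section Rho.
Variables (cp cv L q : R).
Hypotheses (HL : 0 < L) (Hq : 1 < q) (Hcp : 0 <= cp) (Hcv : 0 <= cv) (Hc : cv - 1 <= cp <= cv + 1).
Let U := q * L.
Let a := 3/(U-L).
Let b := -(3*L/(U-L)) - 1.
Lemma HUL : 0 < U - L. Proof. unfold U. nra. Qed.
Lemma HU : 0 < U. Proof. unfold U; nra. Qed.

Lemma smooth_svf : smooth (svf L U). Proof. unfold svf. apply smooth_aff, smooth_Sst. Qed.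
Lemma smooth_A1 : smooth (A1f cp L). Proof. unfold A1f. apply smooth_plus. apply smooth_const. apply smooth_Gf; auto. Qed.
Lemma smooth_A2 : smooth (A2f (cv - cp) L U).
Proof. unfold A2f. apply smooth_plus. apply smooth_const. apply smooth_plus. apply smooth_Gf, HU.
  apply smooth_mult. apply smooth_const. apply smooth_Gf; auto. Qed.
Lemma smooth_1 : smooth (fun _ : R => 1). Proof. apply smooth_const. Qed.

Lemma svf_range y : 0 <= svf L U y <= 1. Proof. apply Sst_range. Qed.
Lemma svf_L : svf L U L = 0.
Proof. unfold svf. pose proof HUL. replace (3 / (U - L) * L + (- (3 * L / (U - L)) - 1)) with (-1) by (field; lra). apply Sst_0; lra. Qed.
Lemma svf_U : svf L U U = 1.
Proof. unfold svf. pose proof HUL. replace (3 / (U - L) * U + (- (3 * L / (U - L)) - 1)) with 2 by (field; lra). apply Sst_1; lra. Qed.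

Lemma rho_L x : rhof cp cv L U x L = 1 + cp + Gf L x.
Proof. unfold rhof, sep2. rewrite svf_L. unfold A1f. ring. Qed.
Lemma rho_U x : rhof cp cv L U x U = 1 + cv + Gf U x.
Proof. unfold rhof, sep2. rewrite svf_U. unfold A1f, A2f. ring. Qed.

Lemma GLU x : 0 <= Gf L x - Gf U x <= ln (q*q). Proof. apply Gf_diff; auto. Qed.

Lemma rho_lower x y : cv + Gf U x <= rhof cp cv L U x y /\ 1 <= rhof cp cv L U x y.
Proof.
  unfold rhof, sep2, A1f, A2f. pose proof (svf_range y). pose proof (GLU x).
  pose proof (Gf_nonneg L x HL). pose proof (Gf_nonneg U x HU).
  set (s := svf L U y) in *. set (gL := Gf L x) in *. set (gU := Gf U x) in *.
  assert (0 <= (1 - s) * (cp + gL)) by (apply Rmult_le_pos; lra).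
  assert (0 <= s * (cv + gU)) by (apply Rmult_le_pos; lra).
  assert (0 <= (1 - s) * (cp + gL - (cv - 1 + gU))) by (apply Rmult_le_pos; lra).
  split; nra.
Qed.

Lemma rho_dy_zero x y : L < y < U -> (y < L + (U-L)/3 \/ L + 2*(U-L)/3 < y) ->
  dy (rhof cp cv L U) x y = 0.
Proof.
  intros Hy Hout. pose proof HUL as HUL. unfold dy, partial.
  assert (Ha : 0 < a) by (unfold a; apply Rdiv_lt_0_compat; lra).
  assert (Harg : forall t, a * t + b = 3 * (t - L) / (U - L) - 1) by (intros; unfold a, b; field; lra).
  destruct Hout as [Ho|Ho].
  - apply (Derive_locconst _ y (L + (U-L)/3 - y)). lra.
    intros u Hu. apply Rabs_def2 in Hu. unfold rhof, sep2, svf. fold a. fold b.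
    rewrite !Sst_0; auto. rewrite Harg. apply Rle_trans with (3 * ((U-L)/3) / (U-L) - 1).
    unfold Rminus. apply Rplus_le_compat_r. unfold Rdiv. apply Rmult_le_compat_r.
    left; apply Rinv_0_lt_compat; lra. lra. right; field; lra.
    rewrite Harg. apply Rle_trans with (3 * ((U-L)/3) / (U-L) - 1).
    unfold Rminus. apply Rplus_le_compat_r. unfold Rdiv. apply Rmult_le_compat_r.
    left; apply Rinv_0_lt_compat; lra. lra. right; field; lra.
  - apply (Derive_locconst _ y (y - (L + 2*(U-L)/3))). lra.
    intros u Hu. apply Rabs_def2 in Hu. unfold rhof, sep2, svf. fold a. fold b.
    rewrite !Sst_1; auto. rewrite Harg. apply Rle_trans with (3 * (2*(U-L)/3) / (U-L) - 1).
    right; field; lra. unfold Rminus. apply Rplus_le_compat_r. unfold Rdiv. apply Rmult_le_compat_r.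
    left; apply Rinv_0_lt_compat; lra. lra.
    rewrite Harg. apply Rle_trans with (3 * (2*(U-L)/3) / (U-L) - 1).
    right; field; lra. unfold Rminus. apply Rplus_le_compat_r. unfold Rdiv. apply Rmult_le_compat_r.
    left; apply Rinv_0_lt_compat; lra. lra.
Qed.
Lemma smooth_G1 : smooth (G1 L).
Proof. rewrite <- Gf_deriv; auto. apply smooth_D, smooth_Gf; auto. Qed.
Lemma smooth_G1U : smooth (G1 U).
Proof. rewrite <- Gf_deriv by apply HU. apply smooth_D, smooth_Gf, HU. Qed.

Lemma DA1 : Derive (A1f cp L) = G1 L.
Proof. apply functional_extensionality; intros x. unfold A1f.
  rewrite (Derive_cplus (Gf L)). rewrite Gf_deriv; auto. apply smooth_ex, smooth_Gf; auto. Qed.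
Lemma DDA1 : Derive (Derive (A1f cp L)) = G2 L.
Proof. rewrite DA1. apply G1_deriv; auto. Qed.
Lemma DA2 : Derive (A2f (cv - cp) L U) = fun x => G1 U x + (-1) * G1 L x.
Proof. apply functional_extensionality; intros x. unfold A2f.
  rewrite (Derive_cplus (fun t => Gf U t + (-1) * Gf L t)). rewrite Derive_pm.
  rewrite !Gf_deriv; auto. apply HU. apply smooth_ex, smooth_Gf, HU. apply smooth_ex, smooth_Gf; auto.
  apply (ex_derive_plus (Gf U) (fun t => (-1) * Gf L t)). apply smooth_ex, smooth_Gf, HU.
  apply ex_derive_mult. apply ex_derive_const. apply smooth_ex, smooth_Gf; auto. Qed.
Lemma DDA2 : Derive (Derive (A2f (cv - cp) L U)) = fun x => G2 U x + (-1) * G2 L x.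
Proof. rewrite DA2. apply functional_extensionality; intros x.
  rewrite Derive_pm. rewrite !G1_deriv; auto. apply HU. apply smooth_ex, smooth_G1U. apply smooth_ex, smooth_G1. Qed.
Lemma D1 : Derive (fun _ : R => 1) = fun _ => 0.
Proof. apply functional_extensionality; intros; apply Derive_const. Qed.
Lemma DD1 : Derive (Derive (fun _ : R => 1)) = fun _ => 0.
Proof. rewrite D1. apply D1 || (apply functional_extensionality; intros; apply Derive_const). Qed.
Lemma Dsv : Derive (svf L U) = fun y => a * Derive Sst (a*y+b).
Proof. apply functional_extensionality; intros y. unfold svf. fold a b.
  apply aff_derive. apply smooth_ex, smooth_Sst. Qed.
Lemma DDsv : Derive (Derive (svf L U)) = fun y => a * (a * Derive (Derive Sst) (a*y+b)).
Proof. rewrite Dsv. apply functional_extensionality; intros y. rewrite Derive_scal.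
  rewrite (aff_derive (Derive Sst)); auto. apply smooth_ex, smooth_D, smooth_Sst. Qed.

Lemma rho_Dw w : Dw w (rhof cp cv L U) =
  sep2 (Derive_n (A1f cp L) (nt w)) (Derive_n (fun _ => 1) (nf w))
       (Derive_n (A2f (cv - cp) L U) (nt w)) (Derive_n (svf L U) (nf w)).
Proof. unfold rhof. apply Dw_sep2. apply smooth_A1. apply smooth_1. apply smooth_A2. apply smooth_svf. Qed.

Lemma rho_dx x y : dx (rhof cp cv L U) x y = G1 L x * 1 + (G1 U x + (-1) * G1 L x) * svf L U y.
Proof. replace (dx (rhof cp cv L U) x y) with (Dw (true :: nil) (rhof cp cv L U) x y) by reflexivity. rewrite rho_Dw. unfold sep2. simpl nt; simpl nf.
  rewrite !Dn1, !Dn0, DA1, DA2. auto. Qed.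
Lemma rho_dy x y : dy (rhof cp cv L U) x y = A1f cp L x * 0 + A2f (cv - cp) L U x * (a * Derive Sst (a*y+b)).
Proof. replace (dy (rhof cp cv L U) x y) with (Dw (false :: nil) (rhof cp cv L U) x y) by reflexivity. rewrite rho_Dw. unfold sep2. simpl nt; simpl nf.
  rewrite !Dn1, !Dn0, D1, Dsv. auto. Qed.
Lemma rho_dxx x y : dx (dx (rhof cp cv L U)) x y = G2 L x * 1 + (G2 U x + (-1) * G2 L x) * svf L U y.
Proof. replace (dx (dx (rhof cp cv L U)) x y) with (Dw (true :: true :: nil) (rhof cp cv L U) x y) by reflexivity. rewrite rho_Dw. unfold sep2. simpl nt; simpl nf.
  rewrite !Dn2, !Dn0, DDA1, DDA2. auto. Qed.
Lemma rho_dyy x y : dy (dy (rhof cp cv L U)) x y = A1f cp L x * 0 + A2f (cv - cp) L U x * (a * (a * Derive (Derive Sst) (a*y+b))).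
Proof. replace (dy (dy (rhof cp cv L U)) x y) with (Dw (false :: false :: nil) (rhof cp cv L U) x y) by reflexivity. rewrite rho_Dw. unfold sep2. simpl nt; simpl nf.
  rewrite !Dn2, !Dn0, DD1, DDsv. auto. Qed.
Lemma abs2 u M : Rabs u <= M -> -M <= u <= M.
Proof. intros H. pose proof (Rle_abs u). pose proof (Rle_abs (-u)). rewrite Rabs_Ropp in *. lra. Qed.

Let Dq := 1 + ln (q*q).
Let K1 := 3*q/(q-1).

Lemma A2_bound x : Rabs (A2f (cv - cp) L U x) <= Dq.
Proof. unfold A2f, Dq. pose proof (GLU x). apply Rabs_le. lra. Qed.

Lemma ya_bound y : 0 < y <= U -> 0 <= y * a <= K1.
Proof.
  intros Hy. pose proof HUL as H. unfold a, K1. split.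
  apply Rmult_le_pos. lra. left; apply Rdiv_lt_0_compat; lra.
  apply Rle_trans with (U * (3/(U-L))). apply Rmult_le_compat_r. left; apply Rdiv_lt_0_compat; lra. lra.
  right. unfold U in *. field. split; lra.
Qed.

Lemma dx_bound x y : Rabs (dx (rhof cp cv L U) x y) <= / L.
Proof.
  rewrite rho_dx. pose proof (svf_range y). set (s := svf L U y) in *.
  pose proof (abs2 _ _ (G1_bound L x HL)). pose proof (abs2 _ _ (G1_bound U x HU)).
  assert (/U <= /L) by (apply Rinv_le_contravar; auto; unfold U; nra).
  assert (0 < /U) by (apply Rinv_0_lt_compat, HU).
  apply Rabs_le. set (gL := G1 L x) in *. set (gU := G1 U x) in *. split; nra.
Qed.

Lemma dxx_bound x y : Rabs (dx (dx (rhof cp cv L U)) x y) <= 2 / (L*L).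
Proof.
  rewrite rho_dxx. pose proof (svf_range y). set (s := svf L U y) in *.
  pose proof (abs2 _ _ (G2_bound L x HL)). pose proof (abs2 _ _ (G2_bound U x HU)).
  assert (2/(U*U) <= 2/(L*L)). { unfold Rdiv. apply Rmult_le_compat_l. lra. apply Rinv_le_contravar. nra. unfold U; replace (q*L*(q*L)) with ((q*q)*(L*L)) by ring; assert (1 < q*q) by nra; assert (0 < L*L) by nra; nra. }
  assert (0 < 2/(U*U)) by (pose proof HU; apply Rdiv_lt_0_compat; nra).
  apply Rabs_le. set (gL := G2 L x) in *. set (gU := G2 U x) in *. split; nra.
Qed.

Variables (M1 M2 : R).
Hypotheses (HM1 : 0 <= M1) (HM2 : 0 <= M2)
  (HM : forall t, Rabs (Derive Sst t) <= M1 /\ Rabs (Derive (Derive Sst) t) <= M2).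

Lemma ydy_bound x y : L < y < U -> y * Rabs (dy (rhof cp cv L U) x y) <= Dq * M1 * K1.
Proof.
  intros Hy. rewrite rho_dy. rewrite Rmult_0_r, Rplus_0_l, !Rabs_mult.
  pose proof (ya_bound y (conj (Rlt_trans _ _ _ HL (proj1 Hy)) (Rlt_le _ _ (proj2 Hy)))).
  pose proof (A2_bound x). destruct (HM (a*y+b)) as [H1 _].
  assert (Ha : 0 < a) by (unfold a; pose proof HUL; apply Rdiv_lt_0_compat; lra).
  rewrite (Rabs_right a) by lra.
  replace (y * (Rabs (A2f (cv - cp) L U x) * (a * Rabs (Derive Sst (a * y + b)))))
    with (Rabs (A2f (cv - cp) L U x) * Rabs (Derive Sst (a * y + b)) * (y * a)) by ring.
  apply Rmult_le_compat. apply Rmult_le_pos; apply Rabs_pos. lra.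
  apply Rmult_le_compat; try apply Rabs_pos; auto. lra.
Qed.

Lemma grad_bound x y : L < y < U ->
  y * sqrt (Rsqr (dx (rhof cp cv L U) x y) + Rsqr (dy (rhof cp cv L U) x y)) <= q + Dq * M1 * K1.
Proof.
  intros Hy. set (u := dx (rhof cp cv L U) x y). set (v := dy (rhof cp cv L U) x y).
  assert (S : sqrt (Rsqr u + Rsqr v) <= Rabs u + Rabs v).
  { rewrite <- (sqrt_Rsqr (Rabs u + Rabs v)) by (pose proof (Rabs_pos u); pose proof (Rabs_pos v); lra).
    apply sqrt_le_1_alt. rewrite (Rsqr_abs u), (Rsqr_abs v). unfold Rsqr.
    pose proof (Rabs_pos u); pose proof (Rabs_pos v). nra. }
  pose proof (ydy_bound x y Hy). fold v in H.
  pose proof (dx_bound x y). fold u in H0.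
  assert (y * Rabs u <= q). { apply Rle_trans with (U * / L). apply Rmult_le_compat; try lra. apply Rabs_pos.
    right. unfold U. field. lra. }
  apply Rle_trans with (y * (Rabs u + Rabs v)). apply Rmult_le_compat_l; lra. lra.
Qed.

Lemma Aalpha_bound alpha x y : L < y < U ->
  Rabs (y ^ 2 * (dx (dx (rhof cp cv L U)) x y + dy (dy (rhof cp cv L U)) x y)
        + alpha * y * dy (rhof cp cv L U) x y) <= 2*q*q + Dq * M2 * (K1 * K1) + Rabs alpha * (Dq * M1 * K1).
Proof.
  intros Hy. pose proof (ydy_bound x y Hy) as Hdy.
  assert (Hxx : y^2 * Rabs (dx (dx (rhof cp cv L U)) x y) <= 2*q*q).
  { apply Rle_trans with (U*U * (2/(L*L))). apply Rmult_le_compat. nra. apply Rabs_pos.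
    simpl. nra. apply dxx_bound. right. unfold U. field. lra. }
  assert (Hyy : y^2 * Rabs (dy (dy (rhof cp cv L U)) x y) <= Dq * M2 * (K1 * K1)).
  { rewrite rho_dyy. rewrite Rmult_0_r, Rplus_0_l, !Rabs_mult.
    pose proof (ya_bound y (conj (Rlt_trans _ _ _ HL (proj1 Hy)) (Rlt_le _ _ (proj2 Hy)))).
    pose proof (A2_bound x). destruct (HM (a*y+b)) as [_ H2].
    assert (Ha : 0 < a) by (unfold a; pose proof HUL; apply Rdiv_lt_0_compat; lra).
    rewrite (Rabs_right a) by lra.
    replace (y^2 * (Rabs (A2f (cv - cp) L U x) * (a * (a * Rabs (Derive (Derive Sst) (a * y + b))))))
      with (Rabs (A2f (cv - cp) L U x) * Rabs (Derive (Derive Sst) (a * y + b)) * ((y * a) * (y * a))) by ring.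
    apply Rmult_le_compat. apply Rmult_le_pos; apply Rabs_pos. nra.
    apply Rmult_le_compat; try apply Rabs_pos; auto. apply Rmult_le_compat; lra. }
  eapply Rle_trans. apply Rabs_triang. rewrite !Rabs_mult.
  rewrite (Rabs_right y) by lra. rewrite (Rabs_right (y^2)) by (apply Rle_ge, pow2_ge_0).
  pose proof (Rabs_triang (dx (dx (rhof cp cv L U)) x y) (dy (dy (rhof cp cv L U)) x y)).
  assert (y^2 * Rabs (dx (dx (rhof cp cv L U)) x y + dy (dy (rhof cp cv L U)) x y) <= 2*q*q + Dq*M2*(K1*K1)).
  { eapply Rle_trans. apply Rmult_le_compat_l. apply pow2_ge_0. apply H. lra. }
  assert (Rabs alpha * (y * Rabs (dy (rhof cp cv L U) x y)) <= Rabs alpha * (Dq * M1 * K1)).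
  { apply Rmult_le_compat_l. apply Rabs_pos. auto. }
  nra.
Qed.
End Rho.
Lemma list_bound {V : Type} (f : V -> R) (l : list V) : exists K, forall v, In v l -> f v <= K.
Proof.
  induction l as [|a l [K HK]]. exists 0; intros v [].
  exists (Rmax (f a) K). intros v [E|Hv]. subst; apply Rmax_l.
  eapply Rle_trans. apply HK; auto. apply Rmax_r.
Qed.

Lemma Gf_inv Q x M : 0 < Q -> Gf Q x <= M -> Rabs x <= Q * exp M.
Proof.
  intros HQ H. unfold Gf in H. pose proof (exp_pos M) as HE. set (E := exp M) in *.
  assert (A : Q*Q + x*x <= Q*Q*E).
  { apply Rnot_lt_le. intros Hlt. apply ln_increasing in Hlt. rewrite ln_mult in Hlt by nra.
    unfold E in Hlt. rewrite ln_exp in Hlt. clear -H Hlt. set (u := ln (Q*Q)) in *. set (w := ln (Q*Q+x*x)) in *. lra. apply Rmult_lt_0_compat; nra. }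
  apply Rnot_lt_le. intros Hlt.
  assert (Q * E * (Q * E) < x * x).
  { assert (0 <= Q*E) by nra. replace (x*x) with (Rabs x * Rabs x).
    apply Rmult_le_0_lt_compat; auto. rewrite <- Rabs_mult. apply Rabs_right. nra. }
  assert (E <= 1 + E * E) by nra. assert (0 < Q*Q) by nra.
  assert (Q*Q*E <= Q*Q*(1+E*E)) by (apply Rmult_le_compat_l; lra). nra.
Qed.

Theorem proposition8p3 :
  forall (p : nat) (q alpha : R) (V : Type) (pred : V -> V) (h : V -> Z),
    (1 <= p)%nat -> 1 < q -> is_homtree_with_end p V pred h ->
    exists rho0 : V -> R -> R -> R,
      (* continuous, values in (0, oo) *)
      (forall v x y, in_strip q (h v) y -> 0 < rho0 v x y) /\
      HT_continuous V pred h q rho0 /\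
      HT_smooth V pred h q rho0 /\
      (* y |-> d_y rho0 (x+iy, v) has compact support in (q^(h v - 1), q^(h v)) *)
      (forall v x, exists a b : R,
          powerRZ q (h v - 1) < a /\ a <= b /\ b < powerRZ q (h v) /\
          forall y, in_ostrip q (h v) y -> (y < a \/ b < y) ->
            dy (rho0 v) x y = 0) /\
      HT_tends_to_infinity V h q rho0 /\
      (* |grad rho0| bounded on HT^o *)
      (exists B : R, forall v x y, in_ostrip q (h v) y ->
          y * sqrt (Rsqr (dx (rho0 v) x y) + Rsqr (dy (rho0 v) x y)) <= B) /\
      (* |A_alpha rho0| bounded on HT^o *)
      (exists B : R, forall v x y, in_ostrip q (h v) y ->
          Rabs (y ^ 2 * (dx (dx (rho0 v)) x y + dy (dy (rho0 v)) x y)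
                + alpha * y * dy (rho0 v) x y) <= B).
Proof.
  intros p q alpha V pred h Hp Hq Htree.
  pose proof Htree as [Hh _].
  destruct (tree_dist V pred p h Htree) as [c [Hc0 [Hc1 HcF]]].
  destruct Sst_bounds as [M1 [M2 [HM1 [HM2 HM]]]].
  set (Lv := fun v => powerRZ q (h v - 1)).
  assert (HLv : forall v, 0 < Lv v) by (intros; apply powerRZ_lt; lra).
  assert (HUv : forall v, powerRZ q (h v) = q * Lv v).
  { intros v. unfold Lv. replace (h v) with ((h v - 1) + 1)%Z at 1 by ring.
    rewrite powerRZ_add by lra. simpl. ring. }
  exists (fun v => rhof (c (pred v)) (c v) (Lv v) (q * Lv v)).
  assert (Cont : HT_continuous V pred h q (fun v => rhof (c (pred v)) (c v) (Lv v) (q * Lv v))).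
  { split.
    - intros w x.
      assert (E1 : powerRZ q (h (pred w)) = q * Lv (pred w)) by apply HUv.
      assert (E2 : powerRZ q (h (pred w)) = Lv w) by (unfold Lv; rewrite Hh; auto).
      transitivity (1 + c (pred w) + Gf (q * Lv (pred w)) x).
      rewrite E1. apply rho_U; auto.
      rewrite E2. rewrite rho_L; auto. rewrite <- E1, E2. auto.
    - intros v x y _ eps Heps.
      pose proof (sep2_cont _ _ _ _ (smooth_A1 (c (pred v)) (Lv v) (HLv v)) smooth_1
                   (smooth_A2 (c (pred v)) (c v) (Lv v) q (HLv v) Hq) (smooth_svf (Lv v) q) x y) as HC.
      destruct (HC (mkposreal eps Heps)) as [d Hd].
      exists d. split. apply cond_pos. intros x' y' _ H1 H2. apply Hd; auto. }
  split.
  { intros v x y _. pose proof (rho_lower (c (pred v)) (c v) (Lv v) q (HLv v) Hq (Hc0 _) (Hc0 _) (Hc1 v) x y). lra. }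
  split. exact Cont.
  split.
  { split. exact Cont. intros v w. rewrite (rho_Dw (c (pred v)) (c v) (Lv v) q (HLv v) Hq w).
    pose proof (smooth_Dn _ (nt w) (smooth_A1 (c (pred v)) (Lv v) (HLv v))) as S1.
    pose proof (smooth_Dn _ (nf w) smooth_1) as S2.
    pose proof (smooth_Dn _ (nt w) (smooth_A2 (c (pred v)) (c v) (Lv v) q (HLv v) Hq)) as S3.
    pose proof (smooth_Dn _ (nf w) (smooth_svf (Lv v) q)) as S4.
    split.
    - intros x y _. split. intros b; apply sep2_ex; auto.
      apply continuity_2d_pt_filterlim. apply sep2_cont; auto.
    - intros Rb. destruct (sep2_bound _ _ _ _ S1 S2 S3 S4 (-Rb) Rb (Lv v) (q * Lv v)) as [B HB].
      exists B. intros x y Hy Hx. apply HB. apply abs2; auto.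
      unfold in_ostrip in Hy. rewrite HUv in Hy. fold (Lv v) in Hy. lra. }
  split.
  { intros v x. pose proof (HLv v). assert (0 < q * Lv v - Lv v) by nra.
    exists (Lv v + (q * Lv v - Lv v)/3), (Lv v + 2*(q * Lv v - Lv v)/3).
    rewrite HUv. fold (Lv v). split. lra. split. lra. split. lra.
    intros y Hy Hout. unfold in_ostrip in Hy. rewrite HUv in Hy. fold (Lv v) in Hy.
    apply rho_dy_zero; auto. }
  split.
  { intros M. destruct (HcF M) as [F HF]. destruct (list_bound (fun v => q * Lv v) F) as [K HK].
    exists F, (Rabs K * exp M). intros v x y Hy Hle.
    destruct (rho_lower (c (pred v)) (c v) (Lv v) q (HLv v) Hq (Hc0 _) (Hc0 _) (Hc1 v) x y) as [Hlow _].
    pose proof (HLv v). assert (0 < q * Lv v) by nra.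
    pose proof (Gf_nonneg (q * Lv v) x H0). pose proof (Hc0 v).
    split. apply HF. lra.
    assert (Rabs x <= q * Lv v * exp M) by (apply Gf_inv; auto; lra).
    eapply Rle_trans. apply H3. apply Rmult_le_compat_r. left; apply exp_pos.
    eapply Rle_trans. apply HK. apply HF; lra. apply Rle_abs. }
  split.
  { eexists. intros v x y Hy. unfold in_ostrip in Hy. rewrite HUv in Hy. fold (Lv v) in Hy.
    apply (grad_bound (c (pred v)) (c v) (Lv v) q (HLv v) Hq (Hc1 v) M1 M2 HM x y Hy). }
  { eexists. intros v x y Hy. unfold in_ostrip in Hy. rewrite HUv in Hy. fold (Lv v) in Hy.
    apply (Aalpha_bound (c (pred v)) (c v) (Lv v) q (HLv v) Hq (Hc1 v) M1 M2 HM alpha x y Hy). }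
Qed.
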